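(* For every level $t \in \mathcal{L}$ there exist finitely many levels $u_1, \ldots, u_n$, each generated by the grammar $u ::= s^k(x) \mid s^k(0) \mid \operatorname{imax}(u, x)$ (with $k \in \mathbb{N}$ and $x \in \mathcal{X}$), such that $t =_{\mathcal{L}} \max(u_1, \ldots, u_n)$.
   Context: $\operatorname{imax}\colon \mathbb{N}\times\mathbb{N}\to\mathbb{N}$ is defined by $\operatorname{imax}(i,0)=0$ and $\operatorname{imax}(i,j+1)=\max(i,j+1)$. Levels are the terms of the grammar $t ::= x \mid 0 \mid s(t) \mid \max(t,t) \mid \operatorname{imax}(t,t)$, where $x$ ranges over a countable set of variables $\mathcal{X}$; $\mathcal{L}$ denotes the set of levels; $s^k$ denotes $k$ applications of $s$. A valuation is a function $\sigma\colon\mathcal{X}\to\mathbb{N}$; the value $[t]_\sigma$ is defined by $[0]_\sigma=0$, $[x]_\sigma=\sigma(x)$, $[s(t)]_\sigma=[t]_\sigma+1$, $[\max(t_1,t_2)]_\sigma=\max([t_1]_\sigma,[t_2]_\sigma)$, $[\operatorname{imax}(t_1,t_2)]_\sigma=\operatorname{imax}([t_1]_\sigma,[t_2]_\sigma)$. $t_1 =_{\mathcal{L}} t_2$ means $[t_1]_\sigma=[t_2]_\sigma$ for every valuation $\sigma$. *)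

(* Defs.v *)
From Stdlib Require Import Arith List.
Import ListNotations.

Inductive level : Type :=
| LVar : nat -> level
| LZero : level
| LSucc : level -> level
| LMax : level -> level -> level
| LIMax : level -> level -> level.

Definition imax (i j : nat) : nat :=
  match j with 0 => 0 | S _ => Nat.max i j end.

Fixpoint eval (sigma : nat -> nat) (t : level) : nat :=
  match t with
  | LVar x => sigma x
  | LZero => 0
  | LSucc t => S (eval sigma t)
  | LMax a b => Nat.max (eval sigma a) (eval sigma b)
  | LIMax a b => imax (eval sigma a) (eval sigma b)
  end.

Definition level_eq (t1 t2 : level) : Prop :=
  forall sigma : nat -> nat, eval sigma t1 = eval sigma t2.

Fixpoint succn (k : nat) (t : level) : level :=
  match k with 0 => t | S k => LSucc (succn k t) end.

Inductive is_u : level -> Prop :=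
| u_svar : forall k x, is_u (succn k (LVar x))
| u_szero : forall k, is_u (succn k LZero)
| u_imax : forall u x, is_u u -> is_u (LIMax u (LVar x)).

Fixpoint max_list (u : level) (us : list level) : level :=
  match us with
  | [] => u
  | v :: vs => LMax u (max_list v vs)
  end.

(* Main.v *)
Require Import Defs.
From Stdlib Require Import List Lia Arith.
Import ListNotations.

Ltac crush := unfold imax in *; repeat (match goal with |- context[match ?m with 0 => _ | S _ => _ end] => destruct m eqn:? end); lia.

Definition evalL (sigma : nat -> nat) (L : list level) : nat :=
  fold_right (fun u acc => Nat.max (eval sigma u) acc) 0 L.

Lemma evalL_app s L1 L2 : evalL s (L1 ++ L2) = Nat.max (evalL s L1) (evalL s L2).
Proof. induction L1; simpl; [reflexivity|]. rewrite IHL1. lia. Qed.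

Lemma eval_succn s k t : eval s (succn k t) = k + eval s t.
Proof. induction k; simpl; lia. Qed.

Lemma imax_maxl a b x : imax (Nat.max a b) x = Nat.max (imax a x) (imax b x).
Proof. unfold imax; destruct x; lia. Qed.

Lemma imax_maxr a b c : imax a (Nat.max b c) = Nat.max (imax a b) (imax a c).
Proof. unfold imax; destruct b, c; simpl; lia. Qed.

Definition imaxL (L : list level) (x : nat) : list level :=
  LIMax LZero (LVar x) :: map (fun u => LIMax u (LVar x)) L.

Lemma imaxL_u L x : Forall is_u L -> Forall is_u (imaxL L x).
Proof.
  intro H. constructor.
  - apply (u_imax (succn 0 LZero)). apply u_szero.
  - apply Forall_map. eapply Forall_impl; [|exact H]. intros; now constructor.
Qed.

Lemma imaxL_eval s L x : evalL s (imaxL L x) = imax (evalL s L) (s x).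
Proof.
  unfold imaxL. induction L as [|a L IH]; simpl in *.
  - unfold imax; destruct (s x); lia.
  - rewrite imax_maxl, <- IH. unfold imax; destruct (s x); lia.
Qed.

Lemma succ_u u : is_u u -> exists L, Forall is_u L /\
  forall s, S (eval s u) = evalL s L.
Proof.
  induction 1 as [k x|k|u x Hu IH].
  - exists [succn (S k) (LVar x)]. split. repeat constructor.
    intro s; simpl; rewrite !eval_succn; simpl; lia.
  - exists [succn (S k) LZero]. split. repeat constructor.
    intro s; simpl; rewrite !eval_succn; simpl; lia.
  - destruct IH as [Lu [HLu E]].
    exists (succn 1 LZero :: LIMax (succn 1 (LVar x)) (LVar x) :: imaxL Lu x).
    split.
    + constructor. constructor. constructor. constructor. constructor.
      apply imaxL_u; auto.
    + intro s. pose proof (imaxL_eval s Lu x) as Ei. unfold evalL in *. simpl in *.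
      rewrite Ei, <- E. unfold imax; destruct (s x) as [|n]; [reflexivity|]. match goal with |- context[match ?m with 0 => _ | S _ => _ end] => destruct m eqn:? end; lia.
Qed.

Lemma succ_L L : Forall is_u L -> exists L', Forall is_u L' /\
  forall s, S (evalL s L) = evalL s L'.
Proof.
  induction 1 as [|a L Ha HL IH].
  - exists [succn 1 LZero]. split. repeat constructor. intro; simpl; lia.
  - destruct IH as [L1 [H1 E1]]. destruct (succ_u a Ha) as [L2 [H2 E2]].
    exists (L2 ++ L1). split. apply Forall_app; auto.
    intro s. rewrite evalL_app, <- E1, <- E2. simpl. fold (evalL s L). lia.
Qed.

Lemma imax_u b : is_u b -> forall L1, Forall is_u L1 -> exists L, Forall is_u L /\
  forall s, evalL s L = imax (evalL s L1) (eval s b).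
Proof.
  intros Hb L1 H1. destruct Hb as [k x|k|u x Hu].
  - destruct k.
    + exists (imaxL L1 x). split. apply imaxL_u; auto. intro; apply imaxL_eval.
    + exists (L1 ++ [succn (S k) (LVar x)]). split.
      apply Forall_app; split; auto. repeat constructor.
      intro s. rewrite evalL_app. simpl. rewrite eval_succn. crush.
  - destruct k.
    + exists []. split. constructor. intro s; simpl; unfold imax; reflexivity.
    + exists (L1 ++ [succn (S k) LZero]). split.
      apply Forall_app; split; auto. repeat constructor.
      intro s. rewrite evalL_app. simpl. rewrite eval_succn. crush.
  - exists (imaxL (L1 ++ [u]) x). split.
    apply imaxL_u. apply Forall_app; split; auto.
    intro s. rewrite imaxL_eval, evalL_app. simpl.
    generalize (evalL s L1) (eval s u) (s x); intros a b c; destruct c; crush.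
Qed.

Lemma imax_LL L1 L2 : Forall is_u L1 -> Forall is_u L2 -> exists L, Forall is_u L /\
  forall s, evalL s L = imax (evalL s L1) (evalL s L2).
Proof.
  intros H1 H2. induction H2 as [|b L2 Hb HL2 IH].
  - exists []. split. constructor. intro s; simpl; unfold imax; reflexivity.
  - destruct IH as [La [Ha Ea]]. destruct (imax_u b Hb L1 H1) as [Lb [Hb' Eb]].
    exists (Lb ++ La). split. apply Forall_app; auto.
    intro s. rewrite evalL_app, Ea, Eb. simpl. fold (evalL s L2).
    rewrite imax_maxr. reflexivity.
Qed.

Lemma normal t : exists L, Forall is_u L /\ forall s, eval s t = evalL s L.
Proof.
  induction t as [x| |t IH|a IHa b IHb|a IHa b IHb].
  - exists [succn 0 (LVar x)]. split. repeat constructor. intro; simpl; lia.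
  - exists []. split. constructor. reflexivity.
  - destruct IH as [L [H E]]. destruct (succ_L L H) as [L' [H' E']].
    exists L'. split; auto. intro s; simpl; rewrite E; auto.
  - destruct IHa as [La [Ha Ea]], IHb as [Lb [Hb Eb]].
    exists (La ++ Lb). split. apply Forall_app; auto.
    intro s; simpl; rewrite evalL_app, Ea, Eb; reflexivity.
  - destruct IHa as [La [Ha Ea]], IHb as [Lb [Hb Eb]].
    destruct (imax_LL La Lb Ha Hb) as [L [H E]].
    exists L. split; auto. intro s; simpl; rewrite E, Ea, Eb; reflexivity.
Qed.

Lemma eval_max_list s u us : eval s (max_list u us) = Nat.max (eval s u) (evalL s us).
Proof.
  revert u; induction us as [|v vs IH]; intro u; simpl.
  - lia.
  - rewrite IH. fold (evalL s vs). lia.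
Qed.

Theorem theorem18 : forall t : level,
  exists (u : level) (us : list level),
    is_u u /\ Forall is_u us /\ level_eq t (max_list u us).
Proof.
  intro t. destruct (normal t) as [L [H E]].
  exists (succn 0 LZero), L. split; [apply u_szero|]. split; auto.
  intro s. rewrite eval_max_list, <- E. simpl. lia.
Qed.
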